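(* Let $q\in(0,1)$ and let $a,b,\alpha,\beta$ be positive real numbers such that $\alpha+\beta t>1$ for all $t\in(0,\infty)$. Define \[ \phi(t)=\frac{(1-q)^{-b\beta t}e^{a\beta\gamma t}\,\Gamma(\alpha+\beta t)^a}{\Gamma_q(\alpha+\beta t)^b},\qquad t\in(0,\infty). \] Then $\phi$ is increasing on $(0,\infty)$, and for every $t\in(0,1)$, \[ \frac{(1-q)^{b\beta t}e^{-a\beta\gamma t}\,\Gamma(\alpha)^a}{\Gamma_q(\alpha)^b} <\frac{\Gamma(\alpha+\beta t)^a}{\Gamma_q(\alpha+\beta t)^b} <\frac{(1-q)^{b\beta(t-1)}e^{a\beta\gamma(1-t)}\,\Gamma(\alpha+\beta)^a}{\Gamma_q(\alpha+\beta)^b}. \]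
   Context: $\Gamma$ is Euler's Gamma function and $\gamma$ is the Euler–Mascheroni constant. For $q\in(0,1)$ and $t>0$, the $q$-Gamma function is $\Gamma_q(t)=(1-q)^{1-t}\prod_{n=1}^{\infty}\frac{1-q^n}{1-q^{t+n}}$. *)

(* Defs.v *)
From Stdlib Require Import Reals.
From Coquelicot Require Import Coquelicot.
Open Scope R_scope.

Definition Gamma (x : R) : R :=
  RInt_gen (fun t => Rpower t (x - 1) * exp (- t))
           (at_right 0) (Rbar_locally p_infty).

Definition euler_gamma : R :=
  real (Lim_seq (fun n => sum_f_R0 (fun k => / INR (S k)) n - ln (INR (S n)))).

Fixpoint qGamma_partial (q t : R) (N : nat) : R :=
  match N with
  | O => 1
  | S N' => qGamma_partial q t N' *
            ((1 - q ^ (S N')) / (1 - Rpower q (t + INR (S N'))))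
  end.

Definition qGamma (q t : R) : R :=
  Rpower (1 - q) (1 - t) * real (Lim_seq (fun N => qGamma_partial q t N)).

(* Main.v *)
Require Import Defs.
From Stdlib Require Import Reals Lra Psatz.
From Coquelicot Require Import Coquelicot.
Open Scope R_scope.

Lemma ev_pair (a0 b0 : R) : 0 < a0 ->
  filter_prod (at_right 0) (Rbar_locally p_infty)
    (fun ab => 0 < fst ab < a0 /\ b0 < snd ab).
Proof.
  intros H.
  apply (Filter_prod _ _ _ (fun a => 0 < a < a0) (fun b => b0 < b)).
  - exists (mkposreal a0 H). intros y Hy Hy0. simpl in *.
    unfold ball in Hy; simpl in Hy; unfold AbsRing_ball, abs, minus, plus, opp in Hy; simpl in Hy.
    apply Rabs_def2 in Hy. lra.
  - exists b0. auto.
  - simpl. auto.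
Qed.

Lemma exRI (g : R -> R) a b : (forall t, 0 < t -> continuous g t) -> 0 < a -> 0 < b ->
  ex_RInt g a b.
Proof.
  intros Hc Ha Hb. apply (ex_RInt_continuous (V:=R_CompleteNormedModule)). intros z Hz. apply Hc.
  destruct Hz as [Hz _]. eapply Rlt_le_trans; [|exact Hz].
  unfold Rmin; destruct Rle_dec; lra.
Qed.

Lemma RInt_mono_pos (g : R -> R) a a0 b0 b :
  (forall t, 0 < t -> continuous g t) -> (forall t, 0 < t -> 0 <= g t) ->
  0 < a -> a <= a0 -> a0 <= b0 -> b0 <= b -> RInt g a0 b0 <= RInt g a b.
Proof.
  intros Hc Hp Ha H1 H2 H3.
  assert (E1 := RInt_Chasles g a a0 b (exRI g a a0 Hc Ha ltac:(lra)) (exRI g a0 b Hc ltac:(lra) ltac:(lra))).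
  assert (E2 := RInt_Chasles g a0 b0 b (exRI g a0 b0 Hc ltac:(lra) ltac:(lra)) (exRI g b0 b Hc ltac:(lra) ltac:(lra))).
  change plus with Rplus in E1, E2. simpl in E1, E2.
  assert (0 <= RInt g a a0).
  { apply RInt_ge_0; auto. apply exRI; auto; lra. intros; apply Hp; lra. }
  assert (0 <= RInt g b0 b).
  { apply RInt_ge_0; auto. apply exRI; auto; lra. intros; apply Hp; lra. }
  lra.
Qed.

Lemma gen_exists (g : R -> R) (M : R) :
  (forall t, 0 < t -> continuous g t) -> (forall t, 0 < t -> 0 <= g t) ->
  (forall a b, 0 < a -> a <= b -> RInt g a b <= M) ->
  exists l, is_RInt_gen g (at_right 0) (Rbar_locally p_infty) l /\
    (forall a b, 0 < a -> a <= b -> RInt g a b <= l) /\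
    (forall m, (forall a b, 0 < a -> a <= b -> RInt g a b <= m) -> l <= m).
Proof.
  intros Hc Hp HM.
  set (E := fun v => exists a b, 0 < a /\ a <= b /\ v = RInt g a b).
  assert (HB : bound E).
  { exists M. intros v [a [b [Ha [Hab ->]]]]. apply HM; auto. }
  assert (HE : exists v, E v).
  { exists (RInt g 1 1). exists 1, 1. repeat split; lra. }
  destruct (completeness E HB HE) as [l [Hub Hleast]].
  exists l. split; [|split].
  - unfold is_RInt_gen, filterlimi, filter_le, filtermapi.
    intros P [eps HP].
    assert (Hx : exists a0 b0, 0 < a0 /\ a0 <= b0 /\ l - eps < RInt g a0 b0).
    { destruct (Classical_Prop.classic (exists a0 b0, 0 < a0 /\ a0 <= b0 /\ l - eps < RInt g a0 b0)) as [H|H]; auto.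
      exfalso. assert (l <= l - eps).
      { apply Hleast. intros v [a [b [Ha [Hab ->]]]].
        apply Rnot_lt_le. intro Hlt. apply H. exists a, b. auto. }
      destruct eps; simpl in *; lra. }
    destruct Hx as [a0 [b0 [Ha0 [Hab0 Hlt]]]].
    eapply filter_imp; [|apply (ev_pair a0 b0 Ha0)].
    intros [a b] [[Ha Ha'] Hb]; simpl in *.
    exists (RInt g a b). split.
    + apply (RInt_correct (V:=R_CompleteNormedModule)). apply exRI; auto; lra.
    + apply HP. unfold ball; simpl; unfold AbsRing_ball, abs, minus, plus, opp; simpl.
      assert (RInt g a b <= l). { apply Hub. exists a, b. repeat split; lra. }
      assert (RInt g a0 b0 <= RInt g a b). { apply RInt_mono_pos; auto; lra. }
      apply Rabs_def1; destruct eps; simpl in *; lra.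
  - intros a b Ha Hab. apply Hub. exists a, b. auto.
  - intros m Hm. apply Hleast. intros v [a [b [Ha [Hab ->]]]]. apply Hm; auto.
Qed.

Definition gi (x t : R) := Rpower t (x - 1) * exp (- t).

Lemma gi_exp x t : gi x t = exp ((x - 1) * ln t - t).
Proof. unfold gi, Rpower. rewrite <- exp_plus. f_equal; ring. Qed.

Lemma gi_cont x t : 0 < t -> continuous (gi x) t.
Proof.
  intros Ht. apply (ex_derive_continuous (K:=R_AbsRing) (V:=R_NormedModule)).
  unfold gi, Rpower. auto_derive. lra.
Qed.

Lemma gi_pos x t : 0 < gi x t.
Proof. rewrite gi_exp. apply exp_pos. Qed.

Lemma ln_le_m1 y : 0 < y -> ln y <= y - 1.
Proof. intros Hy. pose proof (exp_ineq1_le (ln y)). rewrite exp_ln in H; lra. Qed.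

Lemma exp_le_exp x y : x <= y -> exp x <= exp y.
Proof. intros H; destruct (Rle_lt_or_eq_dec _ _ H) as [H'|H']; [left; apply exp_increasing; auto| subst; lra]. Qed.

Lemma ln_le_ln x y : 0 < x -> x <= y -> ln x <= ln y.
Proof. intros H0 H; destruct (Rle_lt_or_eq_dec _ _ H) as [H'|H']; [left; apply ln_increasing; auto| subst; lra]. Qed.

Definition gC x := exp ((x - 1) * ln (2 * x)).

Lemma gi_bound x t : 1 <= x -> 0 < t -> gi x t <= gC x * exp (- t / 2).
Proof.
  intros Hx Ht. rewrite gi_exp. unfold gC. rewrite <- exp_plus.
  apply exp_le_exp.
  assert (H1 : ln (t / (2 * x)) <= t / (2 * x) - 1) by (apply ln_le_m1; apply Rdiv_lt_0_compat; lra).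
  rewrite ln_div in H1 by lra.
  assert (H2 : (x - 1) * (ln t - ln (2 * x)) <= (x - 1) * (t / (2 * x) - 1)).
  { apply Rmult_le_compat_l; lra. }
  assert (H3 : (x - 1) * (t / (2 * x)) <= t / 2).
  { unfold Rdiv. replace ((x-1) * (t * / (2*x))) with (t * / 2 * ((x - 1) / x)) by (field; lra).
    assert ((x-1)/x <= 1). { apply (Rmult_le_reg_r x); [lra|]. unfold Rdiv. rewrite Rmult_assoc, Rinv_l by lra. lra. }
    assert (0 <= t * / 2) by lra. nra. }
  nra.
Qed.

Lemma gC_pos x : 0 < gC x.
Proof. apply exp_pos. Qed.

Lemma RInt_gi_bound x a b : 1 <= x -> 0 < a -> a <= b -> RInt (gi x) a b <= 2 * gC x.
Proof.
  intros Hx Ha Hab.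
  set (h := fun t => gC x * exp (- t / 2)).
  set (F := fun t => -2 * gC x * exp (- t / 2)).
  assert (Hh : is_RInt h a b (minus (F b) (F a))).
  { apply (is_RInt_derive (V:=R_CompleteNormedModule) F h).
    - intros t _. unfold h, F. auto_derive; auto. unfold Rdiv. set (E := exp _). field.
    - intros t _. unfold h. apply (ex_derive_continuous (K:=R_AbsRing) (V:=R_NormedModule)). auto_derive. auto. }
  assert (Hex : ex_RInt h a b) by (eexists; eauto).
  apply (is_RInt_unique (V:=R_CompleteNormedModule)) in Hh.
  assert (RInt (gi x) a b <= RInt h a b).
  { apply RInt_le; auto.
    - apply exRI; auto; [intros; apply gi_cont; auto | lra].
    - intros t Ht. apply gi_bound; auto; lra. }
  rewrite Hh in H. unfold F, minus, plus, opp in H; simpl in H.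
  assert (exp (- a / 2) <= 1). { rewrite <- exp_0. apply exp_le_exp. lra. }
  pose proof (exp_pos (- b / 2)). pose proof (gC_pos x). nra.
Qed.

Lemma Gamma_spec x : 1 <= x ->
  is_RInt_gen (gi x) (at_right 0) (Rbar_locally p_infty) (Gamma x) /\
  (forall a b, 0 < a -> a <= b -> RInt (gi x) a b <= Gamma x) /\
  (forall m, (forall a b, 0 < a -> a <= b -> RInt (gi x) a b <= m) -> Gamma x <= m).
Proof.
  intros Hx.
  destruct (gen_exists (gi x) (2 * gC x)) as [l [H1 [H2 H3]]].
  - intros; apply gi_cont; auto.
  - intros; left; apply gi_pos.
  - intros; apply RInt_gi_bound; auto.
  - assert (E : Gamma x = l).
    { unfold Gamma. apply (is_RInt_gen_unique (V:=R_CompleteNormedModule) (gi x) l H1). }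
    rewrite E. auto.
Qed.

Lemma Gamma_lb x : 1 <= x -> exp (-2) <= Gamma x.
Proof.
  intros Hx. destruct (Gamma_spec x Hx) as [_ [H _]].
  eapply Rle_trans; [|apply (H 1 2); lra].
  replace (exp (-2)) with (RInt (fun _ => exp (-2)) 1 2).
  2:{ rewrite RInt_const. unfold scal; simpl; unfold mult; simpl. ring. }
  apply RInt_le; try lra.
  - apply ex_RInt_const.
  - apply exRI; [intros; apply gi_cont; auto|lra|lra].
  - intros t Ht. rewrite gi_exp. apply exp_le_exp.
    assert (0 <= ln t). { rewrite <- ln_1. apply ln_le_ln; lra. }
    nra.
Qed.

Lemma ballR (x : R) (e : R) (y : R) : ball (M:=R_UniformSpace) x e y <-> Rabs (y - x) < e.
Proof. unfold ball; simpl; unfold AbsRing_ball, abs, minus, plus, opp; simpl. tauto. Qed.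

Lemma exp_m_ln y : 0 < y -> exp (- ln y) = / y.
Proof. intros. rewrite exp_Ropp, exp_ln; auto. Qed.

Section FE.
Variable x : R.
Hypothesis Hx : 1 <= x.

Let F := fun t => - (exp (x * ln t) * exp (- t)).
Let h := fun t => gi (x + 1) t - x * gi x t.

Lemma F_der y : 0 < y -> is_derive F y (h y).
Proof.
  intros Hy. unfold F, h. auto_derive; auto.
  rewrite !gi_exp. replace ((x + 1 - 1) * ln y - y) with (x * ln y + - y) by ring.
  replace ((x - 1) * ln y - y) with (x * ln y + - ln y + - y) by ring.
  rewrite !exp_plus, exp_m_ln by auto. field. lra.
Qed.

Lemma DF_eq y : 0 < y -> Derive F y = h y.
Proof. intros; apply is_derive_unique, F_der; auto. Qed.

Lemma h_cont y : 0 < y -> continuous h y.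
Proof.
  intros Hy. apply (ex_derive_continuous (K:=R_AbsRing) (V:=R_NormedModule)).
  unfold h, gi, Rpower. auto_derive. lra.
Qed.

Lemma DF_cont y : 0 < y -> continuous (Derive F) y.
Proof.
  intros Hy. apply (continuous_ext_loc _ h).
  - exists (mkposreal y Hy). intros z Hz. apply (proj1 (ballR _ _ _)) in Hz. cbn [pos] in Hz.
    apply Rabs_def2 in Hz. destruct Hz. unfold minus, plus, opp in *; simpl in *. rewrite DF_eq; auto; lra.
  - apply h_cont; auto.
Qed.

Lemma F_lim0 : filterlim F (at_right 0) (locally 0).
Proof.
  intros P [eps HP]. unfold filtermap.
  assert (Hd : 0 < Rmin 1 eps) by (apply Rmin_pos; [lra| apply cond_pos]).
  exists (mkposreal _ Hd). intros y Hy Hy0. apply (proj1 (ballR _ _ _)) in Hy. cbn [pos] in Hy.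
  apply HP. apply ballR.
  rewrite Rminus_0_r in Hy. rewrite Rabs_pos_eq in Hy by lra.
  assert (y < 1 /\ y < eps) as [Hy1 Hye].
  { split; eapply Rlt_le_trans; try exact Hy; [apply Rmin_l | apply Rmin_r]. }
  unfold F. rewrite Rminus_0_r, Rabs_Ropp.
  assert (H1 : exp (x * ln y) <= y).
  { rewrite <- (exp_ln y) at 2 by auto. apply exp_le_exp.
    assert (ln y <= 0). { rewrite <- ln_1. apply ln_le_ln; lra. } nra. }
  assert (H2 : exp (- y) <= 1). { rewrite <- exp_0. apply exp_le_exp. lra. }
  pose proof (exp_pos (x * ln y)). pose proof (exp_pos (- y)).
  rewrite Rabs_pos_eq by nra. nra.
Qed.

Lemma F_liminf : filterlim F (Rbar_locally p_infty) (locally 0).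
Proof.
  intros P [eps HP]. unfold filtermap.
  set (C := gC (x + 1)).
  assert (HC : 0 < C) by apply gC_pos.
  exists (Rmax 1 (- 2 * ln (eps / C))). intros t Ht.
  assert (Ht1 : 1 < t) by (eapply Rle_lt_trans; [apply Rmax_l| exact Ht]).
  assert (Ht2 : - 2 * ln (eps / C) < t) by (eapply Rle_lt_trans; [apply Rmax_r| exact Ht]).
  apply HP. apply ballR. unfold F. rewrite Rminus_0_r, Rabs_Ropp.
  assert (E : exp (x * ln t) * exp (- t) = gi (x + 1) t).
  { rewrite gi_exp, <- exp_plus. f_equal. ring. }
  rewrite E. rewrite Rabs_pos_eq by (left; apply gi_pos).
  eapply Rle_lt_trans; [apply gi_bound; lra|].
  fold C.
  assert (exp (- t / 2) < eps / C).
  { rewrite <- (exp_ln (eps / C)) by (apply Rdiv_lt_0_compat; [apply cond_pos|]; auto).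
    apply exp_increasing. lra. }
  apply (Rmult_lt_compat_l C) in H; auto.
  replace (C * (eps / C)) with (pos eps) in H by (field; lra). lra.
Qed.

Lemma h_gen : is_RInt_gen h (at_right 0) (Rbar_locally p_infty) 0.
Proof.
  assert (H := is_RInt_gen_Derive (Fa := at_right 0) (Fb := Rbar_locally p_infty) F 0 0).
  replace (0 - 0) with 0 in H by ring.
  apply (is_RInt_gen_ext (Derive F)).
  - eapply filter_imp; [|apply (ev_pair 1 1); lra].
    intros [a b] [[Ha Ha'] Hb] z Hz; simpl in *. apply DF_eq.
    destruct Hz as [Hz _]. unfold Rmin in Hz; destruct Rle_dec; lra.
  - apply H.
    + eapply filter_imp; [|apply (ev_pair 1 1); lra].
      intros [a b] [[Ha Ha'] Hb] z Hz; simpl in *. eexists; apply F_der.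
      destruct Hz as [Hz _]. unfold Rmin in Hz; destruct Rle_dec; lra.
    + eapply filter_imp; [|apply (ev_pair 1 1); lra].
      intros [a b] [[Ha Ha'] Hb] z Hz; simpl in *. apply DF_cont.
      destruct Hz as [Hz _]. unfold Rmin in Hz; destruct Rle_dec; lra.
    + apply F_lim0.
    + apply F_liminf.
Qed.

Lemma Gamma_fe : Gamma (x + 1) = x * Gamma x.
Proof.
  destruct (Gamma_spec (x + 1)) as [H1 _]; [lra|].
  destruct (Gamma_spec x Hx) as [H2 _].
  assert (H3 := is_RInt_gen_scal _ x _ H2).
  assert (H4 := is_RInt_gen_minus _ _ _ _ H1 H3).
  assert (E1 := is_RInt_gen_unique (V:=R_CompleteNormedModule) _ _ H4).
  assert (E2 := is_RInt_gen_unique (V:=R_CompleteNormedModule) _ _ h_gen).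
  unfold h in E2. unfold minus, plus, opp, scal in E1; simpl in E1. unfold mult in E1; simpl in E1.
  assert (Ef : (fun y => gi (x + 1) y + - (x * gi x y)) = (fun t => gi (x + 1) t - x * gi x t)) by reflexivity.
  rewrite Ef, E2 in E1. lra.
Qed.
End FE.

Definition lG z := ln (Gamma z).

Lemma Gamma_pos z : 1 <= z -> 0 < Gamma z.
Proof. intros; eapply Rlt_le_trans; [apply exp_pos| apply Gamma_lb; auto]. Qed.

Lemma exp_convex l X Y : 0 <= l <= 1 -> exp (l * X + (1 - l) * Y) <= l * exp X + (1 - l) * exp Y.
Proof.
  intros Hl. set (s := l * X + (1 - l) * Y).
  assert (E1 : exp X = exp s * exp (X - s)) by (rewrite <- exp_plus; f_equal; ring).
  assert (E2 : exp Y = exp s * exp (Y - s)) by (rewrite <- exp_plus; f_equal; ring).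
  pose proof (exp_ineq1_le (X - s)). pose proof (exp_ineq1_le (Y - s)).
  pose proof (exp_pos s).
  assert (exp s * (1 + (X - s)) <= exp X) by (rewrite E1; nra).
  assert (exp s * (1 + (Y - s)) <= exp Y) by (rewrite E2; nra).
  assert (l * (exp s * (1 + (X - s))) + (1 - l) * (exp s * (1 + (Y - s))) = exp s) by (unfold s; ring).
  nra.
Qed.

Lemma RInt_lin (f g : R -> R) p q a b : ex_RInt f a b -> ex_RInt g a b ->
  RInt (fun t => p * f t + q * g t) a b = p * RInt f a b + q * RInt g a b.
Proof.
  intros Hf Hg.
  assert (Hf' : ex_RInt (V:=R_CompleteNormedModule) (fun t => scal p (f t)) a b)
    by (apply (ex_RInt_scal (V:=R_CompleteNormedModule)); auto).
  assert (Hg' : ex_RInt (V:=R_CompleteNormedModule) (fun t => scal q (g t)) a b)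
    by (apply (ex_RInt_scal (V:=R_CompleteNormedModule)); auto).
  assert (E : RInt (fun t => p * f t + q * g t) a b = RInt (fun t => p * f t) a b + RInt (fun t => q * g t) a b)
    by exact (RInt_plus (V:=R_CompleteNormedModule) _ _ _ _ Hf' Hg').
  assert (E1 : RInt (fun t => p * f t) a b = p * RInt f a b)
    by exact (RInt_scal (V:=R_CompleteNormedModule) f a b p Hf).
  assert (E2 : RInt (fun t => q * g t) a b = q * RInt g a b)
    by exact (RInt_scal (V:=R_CompleteNormedModule) g a b q Hg).
  rewrite E, E1, E2. reflexivity.
Qed.

Lemma logconv u v w : 1 <= u -> u < v -> v < w ->
  lG v <= (w - v) / (w - u) * lG u + (1 - (w - v) / (w - u)) * lG w.
Proof.
  intros Hu Huv Hvw.
  set (l := (w - v) / (w - u)).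
  assert (Hl : 0 <= l <= 1).
  { unfold l; split.
    - apply Rmult_le_pos; [lra| left; apply Rinv_0_lt_compat; lra].
    - apply (Rmult_le_reg_r (w - u)); [lra|]. unfold Rdiv. rewrite Rmult_assoc, Rinv_l by lra. lra. }
  assert (Hv : v = l * u + (1 - l) * w) by (unfold l; field; lra).
  set (k := lG w - lG u).
  set (c1 := exp ((1 - l) * k)). set (c2 := exp (- l * k)).
  assert (Gu := Gamma_pos u Hu). assert (Gw := Gamma_pos w ltac:(lra)).
  assert (Hle : Gamma v <= l * c1 * Gamma u + (1 - l) * c2 * Gamma w).
  { destruct (Gamma_spec v ltac:(lra)) as [_ [_ Hleast]].
    destruct (Gamma_spec u ltac:(lra)) as [_ [Hu' _]].
    destruct (Gamma_spec w ltac:(lra)) as [_ [Hw' _]].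
    apply Hleast. intros a b Ha Hab.
    assert (exu : ex_RInt (gi u) a b) by (apply exRI; [intros; apply gi_cont; auto| lra| lra]).
    assert (exw : ex_RInt (gi w) a b) by (apply exRI; [intros; apply gi_cont; auto| lra| lra]).
    eapply Rle_trans.
    - apply (RInt_le (gi v) (fun t => (l * c1) * gi u t + ((1 - l) * c2) * gi w t)); auto.
      + apply exRI; [intros; apply gi_cont; auto| lra| lra].
      + apply (ex_RInt_plus (V:=R_CompleteNormedModule)); apply (ex_RInt_scal (V:=R_CompleteNormedModule)); auto.
      + intros t Ht. rewrite !gi_exp.
        replace ((v - 1) * ln t - t) with
          (l * ((u - 1) * ln t - t + (1 - l) * k) + (1 - l) * ((w - 1) * ln t - t - l * k))
          by (rewrite Hv; ring).
        eapply Rle_trans; [apply exp_convex; auto|].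
        unfold c1, c2. replace ((w - 1) * ln t - t - l * k) with (((w - 1) * ln t - t) + (- l * k)) by ring. rewrite !exp_plus.
        right; ring.
    - rewrite RInt_lin by auto.
      assert (0 <= l * c1) by (apply Rmult_le_pos; [lra| left; apply exp_pos]).
      assert (0 <= (1 - l) * c2) by (apply Rmult_le_pos; [lra| left; apply exp_pos]).
      apply Rplus_le_compat; apply Rmult_le_compat_l; auto. }
  assert (E1 : c1 * Gamma u = exp (l * lG u + (1 - l) * lG w)).
  { unfold c1. rewrite <- (exp_ln (Gamma u)) by auto. rewrite <- exp_plus.
    f_equal. unfold k, lG. ring. }
  assert (E2 : c2 * Gamma w = exp (l * lG u + (1 - l) * lG w)).
  { unfold c2. rewrite <- (exp_ln (Gamma w)) by auto. rewrite <- exp_plus.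
    f_equal. unfold k, lG. ring. }
  replace (l * c1 * Gamma u + (1 - l) * c2 * Gamma w) with (exp (l * lG u + (1 - l) * lG w)) in Hle
    by (rewrite Rmult_assoc, E1, Rmult_assoc, E2; ring).
  unfold lG at 1. rewrite <- (ln_exp (l * lG u + (1 - l) * lG w)).
  apply ln_le_ln; auto. apply Gamma_pos; lra.
Qed.

Lemma lG_fe z : 1 <= z -> lG (z + 1) = lG z + ln z.
Proof.
  intros Hz. unfold lG. rewrite Gamma_fe by auto. rewrite ln_mult; [ring|lra|apply Gamma_pos; auto].
Qed.

Section Dz.
Variable h : R.
Hypothesis Hh : 0 < h.
Let Dz z := lG (z + h) - lG z.

Lemma Dz_step z : 1 <= z -> Dz z = Dz (z + 1) - (ln (z + h) - ln z).
Proof.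
  intros Hz. unfold Dz. replace (z + 1 + h) with (z + h + 1) by ring.
  rewrite !lG_fe by lra. ring.
Qed.

Lemma ln_diff_le z : 1 <= z -> ln (z + h) - ln z <= h / z.
Proof.
  intros Hz. rewrite <- ln_div by lra.
  eapply Rle_trans; [apply ln_le_m1; apply Rdiv_lt_0_compat; lra|].
  right; field; lra.
Qed.

Lemma Dz_conv z : 1 <= z -> h * ln z <= Dz (z + 1).
Proof.
  intros Hz. unfold Dz.
  assert (H := logconv z (z + 1) (z + 1 + h) Hz ltac:(lra) ltac:(lra)).
  replace ((z + 1 + h - (z + 1)) / (z + 1 + h - z)) with (h / (1 + h)) in H by (field; lra).
  rewrite lG_fe in H |- * by lra.
  replace (z + 1 + h) with (z + 1 + h) in H by ring.
  assert (H2 : (1 + h) * (lG z + ln z) <= h * lG z + lG (z + 1 + h)).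
  { apply (Rmult_le_compat_l (1 + h)) in H; [|lra].
    eapply Rle_trans; [exact H| right; field; lra]. }
  nra.
Qed.

Lemma Dz_ind m : forall z, 1 <= z ->
  h * ln (z + INR m) - h * sum_f_R0 (fun k => / (z + INR k)) m <= Dz z.
Proof.
  induction m as [|m IH]; intros z Hz.
  - simpl. rewrite Rplus_0_r. rewrite (Dz_step z Hz).
    pose proof (Dz_conv z Hz). pose proof (ln_diff_le z Hz).
    unfold Rdiv in *. lra.
  - rewrite (Dz_step z Hz).
    pose proof (IH (z + 1) ltac:(lra)). pose proof (ln_diff_le z Hz).
    rewrite decomp_sum by lia. simpl pred.
    rewrite Rplus_0_r.
    assert (E : sum_f_R0 (fun i => / (z + INR (S i))) m = sum_f_R0 (fun k => / (z + 1 + INR k)) m).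
    { apply sum_eq. intros i _. rewrite S_INR. f_equal. ring. }
    rewrite E. replace (z + INR (S m)) with (z + 1 + INR m) by (rewrite S_INR; ring).
    unfold Rdiv in *. nra.
Qed.

Definition eseq m := sum_f_R0 (fun k => / INR (S k)) m - ln (INR (S m)).

Lemma Dz_e m z : 1 <= z -> - h * eseq m <= Dz z.
Proof.
  intros Hz. eapply Rle_trans; [|apply (Dz_ind m z Hz)].
  unfold eseq.
  assert (ln (INR (S m)) <= ln (z + INR m)).
  { apply ln_le_ln; rewrite S_INR; pose proof (pos_INR m); lra. }
  assert (sum_f_R0 (fun k => / (z + INR k)) m <= sum_f_R0 (fun k => / INR (S k)) m).
  { apply sum_Rle. intros n _. rewrite S_INR. pose proof (pos_INR n).
    apply Rinv_le_contravar; lra. }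
  nra.
Qed.
End Dz.

Lemma eseq_decr m : eseq (S m) <= eseq m.
Proof.
  unfold eseq. rewrite tech5.
  assert (ln (INR (S m) / INR (S (S m))) <= INR (S m) / INR (S (S m)) - 1).
  { apply ln_le_m1. apply Rdiv_lt_0_compat; apply lt_0_INR; lia. }
  rewrite ln_div in H by (apply lt_0_INR; lia).
  replace (INR (S m) / INR (S (S m)) - 1) with (- / INR (S (S m))) in H.
  - lra.
  - rewrite (S_INR (S m)). field. rewrite S_INR. pose proof (pos_INR m). lra.
Qed.

Lemma harm_ge m : ln (INR (S (S m))) <= sum_f_R0 (fun k => / INR (S k)) m.
Proof.
  induction m as [|m IH].
  - simpl. replace (1 + 1) with 2 by ring.
    pose proof (ln_le_m1 2 ltac:(lra)). lra.
  - rewrite tech5.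
    assert (ln (INR (S (S (S m))) / INR (S (S m))) <= INR (S (S (S m))) / INR (S (S m)) - 1).
    { apply ln_le_m1. apply Rdiv_lt_0_compat; apply lt_0_INR; lia. }
    rewrite ln_div in H by (apply lt_0_INR; lia).
    replace (INR (S (S (S m))) / INR (S (S m)) - 1) with (/ INR (S (S m))) in H.
    + lra.
    + rewrite (S_INR (S (S m))). field. apply Rgt_not_eq. apply lt_0_INR; lia.
Qed.

Lemma eseq_lim : is_lim_seq eseq euler_gamma.
Proof.
  assert (Hex : ex_finite_lim_seq eseq).
  { apply (ex_finite_lim_seq_decr _ 0).
    - apply eseq_decr.
    - intros n. unfold eseq. pose proof (harm_ge n).
      assert (ln (INR (S n)) <= ln (INR (S (S n)))).
      { apply ln_le_ln; [apply lt_0_INR; lia| apply le_INR; lia]. }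
      lra. }
  destruct Hex as [l Hl].
  unfold euler_gamma. fold eseq. rewrite (is_lim_seq_unique _ _ Hl). simpl. exact Hl.
Qed.

Lemma lG_gamma z h : 1 <= z -> 0 < h -> - h * euler_gamma <= lG (z + h) - lG z.
Proof.
  intros Hz Hh.
  assert (H1 := is_lim_seq_scal_l _ (- h) _ eseq_lim).
  assert (H2 := is_lim_seq_const (lG (z + h) - lG z)).
  assert (H := is_lim_seq_le _ _ _ _ (fun m => Dz_e h Hh m z Hz) H1 H2).
  simpl in H. exact H.
Qed.

Section Q.
Variable q : R.
Hypothesis Hq : 0 < q < 1.

Lemma lnq_neg : ln q < 0.
Proof. rewrite <- ln_1. apply ln_increasing; lra. Qed.

Lemma Rpq_mono x y : x < y -> Rpower q y < Rpower q x.
Proof. intros. unfold Rpower. apply exp_increasing. pose proof lnq_neg. nra. Qed.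

Lemma Rpq_pos x : 0 < Rpower q x.
Proof. apply exp_pos. Qed.

Lemma Rpq_shift t n : 0 < t -> Rpower q (t + INR n) < q ^ n.
Proof.
  intros Ht. rewrite Rpower_plus, Rpower_pow by lra.
  assert (Rpower q t < 1). { rewrite <- (Rpower_O q) by lra. apply Rpq_mono; auto. }
  pose proof (pow_lt q n ltac:(lra)). nra.
Qed.

Let r t n := (1 - q ^ (S n)) / (1 - Rpower q (t + INR (S n))).

Lemma pow_lt1 n : q ^ (S n) < 1.
Proof. apply pow_lt_1_compat; [lra| lia]. Qed.

Lemma r_bounds t n : 0 < t -> 1 - q ^ (S n) <= r t n /\ r t n < 1 /\ 0 < r t n.
Proof.
  intros Ht. unfold r.
  pose proof (Rpq_shift t (S n) Ht). pose proof (Rpq_pos (t + INR (S n))). pose proof (pow_lt1 n).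
  repeat split.
  - apply (Rmult_le_reg_r (1 - Rpower q (t + INR (S n)))); [lra|].
    unfold Rdiv. rewrite Rmult_assoc, Rinv_l by lra. nra.
  - apply (Rmult_lt_reg_r (1 - Rpower q (t + INR (S n)))); [lra|].
    unfold Rdiv. rewrite Rmult_assoc, Rinv_l by lra. lra.
  - apply Rdiv_lt_0_compat; lra.
Qed.

Lemma r_mono x y n : 0 < x < y -> r y n <= r x n.
Proof.
  intros H. unfold r.
  pose proof (Rpq_shift x (S n) ltac:(lra)). pose proof (Rpq_shift y (S n) ltac:(lra)).
  pose proof (Rpq_mono (x + INR (S n)) (y + INR (S n)) ltac:(lra)). pose proof (pow_lt1 n).
  unfold Rdiv. apply Rmult_le_compat_l; [lra|].
  apply Rinv_le_contravar; lra.
Qed.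

Lemma r_mono_strict x y : 0 < x < y -> r y 0 < r x 0.
Proof.
  intros H. unfold r.
  pose proof (Rpq_shift x 1 ltac:(lra)). pose proof (Rpq_shift y 1 ltac:(lra)).
  pose proof (Rpq_mono (x + INR 1) (y + INR 1) ltac:(lra)). pose proof (pow_lt1 0).
  unfold Rdiv. apply Rmult_lt_compat_l; [lra|].
  apply Rinv_lt_contravar; [|lra]. simpl in *. nra.
Qed.

Lemma part_S t N : qGamma_partial q t (S N) = qGamma_partial q t N * r t N.
Proof. reflexivity. Qed.

Lemma part_pos t N : 0 < t -> 0 < qGamma_partial q t N.
Proof.
  intros Ht. induction N; [simpl; lra|]. rewrite part_S.
  destruct (r_bounds t N Ht) as [_ [_ H]]. nra.
Qed.

Lemma part_decr t N : 0 < t -> qGamma_partial q t (S N) <= qGamma_partial q t N.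
Proof.
  intros Ht. rewrite part_S. destruct (r_bounds t N Ht) as [_ [H _]].
  pose proof (part_pos t N Ht). nra.
Qed.

Lemma one_minus_ge u : 0 <= u <= q -> exp (- (u / (1 - q))) <= 1 - u.
Proof.
  intros Hu. rewrite exp_Ropp.
  pose proof (exp_ineq1_le (u / (1 - q))).
  assert (1 <= (1 - u) * (1 + u / (1 - q))).
  { replace ((1 - u) * (1 + u / (1 - q))) with (1 + u * (q - u) / (1 - q)) by (field; lra).
    assert (0 <= u * (q - u) / (1 - q)).
    { apply Rmult_le_pos; [nra| left; apply Rinv_0_lt_compat; lra]. } lra. }
  pose proof (exp_pos (u / (1 - q))).
  apply (Rmult_le_reg_r (exp (u / (1 - q)))); auto.
  rewrite Rinv_l by lra. nra.
Qed.

Lemma part_lb t N : 0 < t -> exp (- ((q - q ^ (S N)) / (1 - q) ^ 2)) <= qGamma_partial q t N.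
Proof.
  intros Ht. induction N.
  - simpl. replace (q - q * 1) with 0 by ring. unfold Rdiv; rewrite Rmult_0_l, Ropp_0, exp_0. lra.
  - rewrite part_S. destruct (r_bounds t N Ht) as [H1 _].
    assert (H2 : exp (- (q ^ S N / (1 - q))) <= 1 - q ^ S N).
    { apply one_minus_ge. split; [left; apply pow_lt; lra|].
      simpl. pose proof (pow_incr q 1 N ltac:(lra)) as HH. rewrite pow1 in HH.
      assert (0 <= q ^ N) by (apply pow_le; lra). nra. }
    replace (- ((q - q ^ S (S N)) / (1 - q) ^ 2)) with
      (- ((q - q ^ S N) / (1 - q) ^ 2) + - (q ^ S N / (1 - q))).
    2:{ simpl. field. lra. }
    rewrite exp_plus.
    apply Rmult_le_compat; try (left; apply exp_pos); lra.
Qed.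

Definition Pq t := real (Lim_seq (qGamma_partial q t)).

Lemma Pq_spec t : 0 < t -> is_lim_seq (qGamma_partial q t) (Pq t) /\ exp (- (q / (1 - q) ^ 2)) <= Pq t.
Proof.
  intros Ht.
  assert (Hex : ex_finite_lim_seq (qGamma_partial q t)).
  { apply (ex_finite_lim_seq_decr _ 0).
    - intros; apply part_decr; auto.
    - intros; left; apply part_pos; auto. }
  destruct Hex as [l Hl].
  assert (E : Pq t = l) by (unfold Pq; rewrite (is_lim_seq_unique _ _ Hl); reflexivity).
  rewrite E. split; auto.
  assert (Hb : forall N, exp (- (q / (1 - q) ^ 2)) <= qGamma_partial q t N).
  { intros N. eapply Rle_trans; [|apply (part_lb t N Ht)]. apply exp_le_exp.
    apply Ropp_le_contravar. unfold Rdiv. apply Rmult_le_compat_r.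
    + left; apply Rinv_0_lt_compat. apply pow_lt; lra.
    + pose proof (pow_lt q (S N) ltac:(lra)). lra. }
  exact (is_lim_seq_le _ _ _ _ Hb (is_lim_seq_const _) Hl).
Qed.

Lemma Pq_pos t : 0 < t -> 0 < Pq t.
Proof. intros Ht. destruct (Pq_spec t Ht) as [_ H]. eapply Rlt_le_trans; [apply exp_pos|exact H]. Qed.

Lemma Pq_strict x y : 0 < x < y -> Pq y < Pq x.
Proof.
  intros Hxy.
  destruct (r_bounds x 0 ltac:(lra)) as [_ [_ Hx0]].
  destruct (r_bounds y 0 ltac:(lra)) as [_ [_ Hy0]].
  pose proof (r_mono_strict x y Hxy) as Hs.
  set (k := r x 0 / r y 0).
  assert (Hk : 1 < k).
  { unfold k. apply (Rmult_lt_reg_r (r y 0)); auto. unfold Rdiv. rewrite Rmult_assoc, Rinv_l by lra. lra. }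
  assert (Hc : forall N, k * qGamma_partial q y (S N) <= qGamma_partial q x (S N)).
  { induction N.
    - rewrite !part_S. simpl. unfold k. right. field. lra.
    - rewrite (part_S y (S N)), (part_S x (S N)).
      pose proof (r_mono x y (S N) Hxy).
      destruct (r_bounds y (S N) ltac:(lra)) as [_ [_ Hr]].
      pose proof (part_pos x (S N) ltac:(lra)). set (ry := r y (S N)) in *. set (rx := r x (S N)) in *.
      apply Rle_trans with (qGamma_partial q x (S N) * ry); [|apply Rmult_le_compat_l; lra].
      rewrite <- Rmult_assoc. apply Rmult_le_compat_r; lra. }
  destruct (Pq_spec x ltac:(lra)) as [Lx _].
  destruct (Pq_spec y ltac:(lra)) as [Ly _].
  apply is_lim_seq_incr_1 in Lx. apply is_lim_seq_incr_1 in Ly.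
  assert (Ly' := is_lim_seq_scal_l _ k _ Ly).
  assert (H := is_lim_seq_le _ _ _ _ Hc Ly' Lx). simpl in H.
  pose proof (Pq_pos y ltac:(lra)). nra.
Qed.

Lemma qGamma_eq t : 0 < t -> qGamma q t = Rpower (1 - q) (1 - t) * Pq t.
Proof. reflexivity. Qed.

Lemma qGamma_pos t : 0 < t -> 0 < qGamma q t.
Proof. intros Ht. rewrite qGamma_eq by auto. apply Rmult_lt_0_compat; [apply exp_pos| apply Pq_pos; auto]. Qed.

Lemma qGamma_ln t : 0 < t -> ln (qGamma q t) = (1 - t) * ln (1 - q) + ln (Pq t).
Proof.
  intros Ht. rewrite qGamma_eq by auto. rewrite ln_mult; [|apply exp_pos| apply Pq_pos; auto].
  rewrite ln_Rpower. reflexivity.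
Qed.
End Q.

Lemma e4 A B C D0 : exp A * exp B * exp C / exp D0 = exp (A + B + C - D0).
Proof. unfold Rminus, Rdiv. rewrite !exp_plus, exp_Ropp. ring. Qed.

Lemma e2 C D0 : exp C / exp D0 = exp (C - D0).
Proof. unfold Rminus, Rdiv. rewrite !exp_plus, exp_Ropp. ring. Qed.

Lemma key q a b x y : 0 < q < 1 -> 0 < a -> 0 < b -> 1 <= x -> x < y ->
  0 < a * (lG y - lG x + euler_gamma * (y - x)) + b * (ln (Pq q x) - ln (Pq q y)).
Proof.
  intros Hq Ha Hb Hx Hxy.
  assert (H1 := lG_gamma x (y - x) Hx ltac:(lra)).
  replace (x + (y - x)) with y in H1 by ring.
  assert (H2 : ln (Pq q y) < ln (Pq q x)).
  { apply ln_increasing; [apply Pq_pos; auto; lra| apply Pq_strict; auto; lra]. }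
  assert (0 <= lG y - lG x + euler_gamma * (y - x)) by lra.
  nra.
Qed.

Lemma Gpow z a : Rpower (Gamma z) a = exp (a * lG z).
Proof. reflexivity. Qed.

Lemma Qpow q z b : 0 < q < 1 -> 0 < z -> Rpower (qGamma q z) b = exp (b * ((1 - z) * ln (1 - q) + ln (Pq q z))).
Proof. intros. unfold Rpower at 1. rewrite qGamma_ln; auto. Qed.

Lemma form3 q a b c e z : 0 < q < 1 -> 0 < z ->
  Rpower (1 - q) c * exp e * Rpower (Gamma z) a / Rpower (qGamma q z) b =
  exp (c * ln (1 - q) + e + a * lG z - b * ((1 - z) * ln (1 - q) + ln (Pq q z))).
Proof. intros. rewrite Gpow, Qpow by auto. unfold Rpower. apply e4. Qed.

Lemma form1 q a b z : 0 < q < 1 -> 0 < z ->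
  Rpower (Gamma z) a / Rpower (qGamma q z) b =
  exp (a * lG z - b * ((1 - z) * ln (1 - q) + ln (Pq q z))).
Proof. intros. rewrite Gpow, Qpow by auto. apply e2. Qed.

Theorem theorem3p8 (q a b alpha beta : R) :
  0 < q < 1 -> 0 < a -> 0 < b -> 0 < alpha -> 0 < beta ->
  (forall t, 0 < t -> 1 < alpha + beta * t) ->
  let phi := fun t =>
    Rpower (1 - q) (- b * beta * t) * exp (a * beta * euler_gamma * t) *
    Rpower (Gamma (alpha + beta * t)) a /
    Rpower (qGamma q (alpha + beta * t)) b in
  (forall s t, 0 < s -> s < t -> phi s < phi t) /\
  (forall t, 0 < t < 1 ->
     Rpower (1 - q) (b * beta * t) * exp (- a * beta * euler_gamma * t) *
       Rpower (Gamma alpha) a / Rpower (qGamma q alpha) b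
     < Rpower (Gamma (alpha + beta * t)) a / Rpower (qGamma q (alpha + beta * t)) b
     /\
     Rpower (Gamma (alpha + beta * t)) a / Rpower (qGamma q (alpha + beta * t)) b
     < Rpower (1 - q) (b * beta * (t - 1)) * exp (a * beta * euler_gamma * (1 - t)) *
       Rpower (Gamma (alpha + beta)) a / Rpower (qGamma q (alpha + beta)) b).
Proof.
  intros Hq Ha Hb Hal Hbe Hz phi.
  assert (Hal1 : 1 <= alpha).
  { destruct (Rle_or_lt 1 alpha) as [H|H]; auto.
    assert (H' := Hz ((1 - alpha) / (2 * beta)) ltac:(apply Rdiv_lt_0_compat; lra)).
    replace (alpha + beta * ((1 - alpha) / (2 * beta))) with ((1 + alpha) / 2) in H' by (field; lra).
    lra. }
  split.
  - intros s t Hs Hst. subst phi. cbv beta.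
    rewrite !form3 by (auto; nra).
    apply exp_increasing.
    assert (K := key q a b (alpha + beta * s) (alpha + beta * t) Hq Ha Hb ltac:(nra) ltac:(nra)).
    set (L := ln (1 - q)) in *.
    set (Ps := ln (Pq q (alpha + beta * s))) in *. set (Pt := ln (Pq q (alpha + beta * t))) in *.
    set (Gs := lG (alpha + beta * s)) in *. set (Gt := lG (alpha + beta * t)) in *.
    replace (alpha + beta * t - (alpha + beta * s)) with (beta * (t - s)) in K by ring.
    nra.
  - intros t Ht. split.
    + rewrite form3, form1 by (auto; nra).
      apply exp_increasing.
      assert (K := key q a b alpha (alpha + beta * t) Hq Ha Hb Hal1 ltac:(nra)).
      replace (alpha + beta * t - alpha) with (beta * t) in K by ring.
      nra.
    + rewrite form3, form1 by (auto; nra).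
      apply exp_increasing.
      assert (K := key q a b (alpha + beta * t) (alpha + beta) Hq Ha Hb ltac:(nra) ltac:(nra)).
      replace (alpha + beta - (alpha + beta * t)) with (beta * (1 - t)) in K by ring.
      nra.
Qed.
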